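(* Let $d\ge1$, $\Omega_s<0$, $\mathbf{\Omega}_a\in\mathbb{R}^{d\times d}$ skew-symmetric, $\mathbf{\Omega}=\Omega_s\mathbf{I}+\mathbf{\Omega}_a$, $D>0$, $\Sigma_0>0$, $\mathbf{m}_0\in\mathbb{R}^d$, $T>0$, $\epsilon\ge0$, $\lambda>0$, and let $\hat{\mathbf{D}}\in\mathbb{R}^{d\times d}$ be symmetric. Let $\mathbf{m}_t=e^{\mathbf{\Omega}t}\mathbf{m}_0$ and $\sigma_t^2=\Sigma_0e^{2\Omega_st}+D(e^{2\Omega_st}-1)/\Omega_s$ (so the isotropic Ornstein–Uhlenbeck process $d\mathbf{x}=\mathbf{\Omega}\mathbf{x}dt+\sqrt{2D}d\mathbf{W}$, $\mathbf{x}_0\sim\mathcal{N}(\mathbf{m}_0,\Sigma_0\mathbf{I})$, has marginals $\mathcal{N}(\mathbf{m}_t,\sigma_t^2\mathbf{I})$). Set $\mathbf{P}=\int_0^T\mathbf{m}_t\mathbf{m}_t^Tdt$, with eigendecomposition $\mathbf{P}=\sum_{i=1}^d\gamma_i\mathbf{u}_i\mathbf{u}_i^T$ ($\{\mathbf{u}_i\}$ orthonormal, $\gamma_1\ge\dots\ge\gamma_d\ge0$), and $$q=\int_0^T\frac{\sigma_t^4}{\sqrt{\epsilon^2/16+\sigma_t^4}}dt,\qquad r=\int_0^T\frac{\sigma_t^2}{\sqrt{\epsilon^2/16+\sigma_t^4}}dt.$$ Consider, for $\hat{\mathbf{\Omega}}\in\mathbb{R}^{d\times d}$, $$\mathcal{L}_\epsilon(\hat{\mathbf{\Omega}})=\mathrm{tr}\Big((\hat{\mathbf{\Omega}}-\mathbf{\Omega})^T(\hat{\mathbf{\Omega}}-\mathbf{\Omega})\mathbf{P}+\tfrac{q}{4}(\hat{\mathbf{\Omega}}+\hat{\mathbf{\Omega}}^T-2\Omega_s\mathbf{I})^2+r(\hat{\mathbf{\Omega}}+\hat{\mathbf{\Omega}}^T-2\Omega_s\mathbf{I})(\hat{\mathbf{D}}-D\mathbf{I})+\lambda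 T\hat{\mathbf{\Omega}}\hat{\mathbf{\Omega}}^T\Big).$$ Let $\tilde\lambda=\lambda T$, $\tilde q=q+\tilde\lambda$, $\Gamma_+=\tfrac12(\tilde\lambda^{-1}+\tilde q^{-1})$, $\omega_{ij}=\mathbf{u}_i^T\mathbf{\Omega}_a\mathbf{u}_j$ and $\eta_{ij}=\mathbf{u}_i^T\big(\Omega_s\mathbf{I}+r(\hat{\mathbf{D}}-D\mathbf{I})/\tilde\lambda\big)\mathbf{u}_j$. Then the minimum of $\mathcal{L}_\epsilon$ over $\mathbb{R}^{d\times d}$ is attained at $$\hat{\mathbf{\Omega}}=\mathbf{\Omega}-\sum_{i,j=1}^d\frac{\tilde\lambda\tilde q^{-1}\eta_{ij}(1+\gamma_i\tilde\lambda^{-1})+\omega_{ij}(1+\gamma_i\tilde q^{-1})}{\tilde q^{-1}\tilde\lambda^{-1}\gamma_i\gamma_j+\Gamma_+(\gamma_i+\gamma_j)+1}\,\mathbf{u}_i\mathbf{u}_j^T.$$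
   Context: $\mathcal{L}_\epsilon$ is the continuous-time limit of the regularized Sinkhorn-divergence (entropic regularization $\epsilon$) inference loss for a linear force $\hat{\mathbf{\Omega}}\mathbf{x}$ with assumed diffusion tensor $\hat{\mathbf{D}}$ in this isotropic setting; the claim concerns this explicit function only. *)

(* Defs.v *)
From HB Require Import structures.
From mathcomp Require Import all_boot all_order all_algebra.
From mathcomp Require Import all_classical all_reals all_analysis.
Set Implicit Arguments. Unset Strict Implicit. Unset Printing Implicit Defensive.
Import Order.TTheory GRing.Theory Num.Theory.
Import numFieldNormedType.Exports.
Local Open Scope classical_set_scope.
Local Open Scope ring_scope.

Section Defs.
Variables (R : realType) (n : nat).
Notation d := n.+1.
Notation M := 'M[R]_d.

Definition expmx (A : M) : M :=
  limn (fun N : nat => \sum_(k < N) ((k`!)%:R^-1 : R) *: A ^+ k).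

Definition mean (Om : M) (m0 : 'cV[R]_d) (t : R) : 'cV[R]_d :=
  expmx (t *: Om) *m m0.

Definition sigma2 (Oms D Sig0 t : R) : R :=
  Sig0 * expR (2 * Oms * t) + D * (expR (2 * Oms * t) - 1) / Oms.

Definition Pmat (Om : M) (m0 : 'cV[R]_d) (T : R) : M :=
  \matrix_(i, j) Rintegral lebesgue_measure `[0, T]
     (fun t => (mean Om m0 t *m (mean Om m0 t)^T) i j).

Definition qval (Oms D Sig0 eps T : R) : R :=
  Rintegral lebesgue_measure `[0, T]
    (fun t => (sigma2 Oms D Sig0 t) ^+ 2 /
       Num.sqrt (eps ^+ 2 / 16 + (sigma2 Oms D Sig0 t) ^+ 2)).

Definition rval (Oms D Sig0 eps T : R) : R :=
  Rintegral lebesgue_measure `[0, T]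
    (fun t => sigma2 Oms D Sig0 t /
       Num.sqrt (eps ^+ 2 / 16 + (sigma2 Oms D Sig0 t) ^+ 2)).

Definition Lloss (Oms : R) (Oma : M) (D Sig0 : R) (m0 : 'cV[R]_d)
    (T eps lam : R) (Dhat Ohat : M) : R :=
  let Om := Oms%:M + Oma in
  let P := Pmat Om m0 T in
  let q := qval Oms D Sig0 eps T in
  let r := rval Oms D Sig0 eps T in
  let S := Ohat + Ohat^T - (2 * Oms)%:M in
  \tr ((Ohat - Om)^T *m (Ohat - Om) *m P
       + (q / 4) *: (S *m S)
       + r *: (S *m (Dhat - D%:M))
       + (lam * T) *: (Ohat *m Ohat^T)).

End Defs.

(* Main.v *)
Require Import Defs.
From HB Require Import structures.
From mathcomp Require Import all_boot all_order all_algebra.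
From mathcomp Require Import all_classical all_reals all_analysis.
From mathcomp Require Import ring lra.
Import Order.TTheory GRing.Theory Num.Theory.
Local Open Scope ring_scope.

Section Gen.
Variables (R : realFieldType) (n : nat).
Local Notation M := 'M[R]_n.+1.

Lemma trAAt_ge0 m k (A : 'M[R]_(m, k)) : 0 <= \tr (A *m A^T).
Proof.
rewrite /mxtrace; apply: sumr_ge0 => i _; rewrite !mxE; apply: sumr_ge0 => j _.
by rewrite !mxE -expr2 sqr_ge0.
Qed.

Lemma trBdB_ge0 m (B : 'M[R]_(m, n.+1)) (g : 'I_n.+1 -> R) :
  (forall i, 0 <= g i) -> 0 <= \tr (B *m diag_mx (\row_i g i) *m B^T).
Proof.
move=> hg; rewrite /mxtrace; apply: sumr_ge0 => i _; rewrite !mxE; apply: sumr_ge0 => j _.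
rewrite !mxE (bigD1 j) //= big1 ?addr0; last first.
  by move=> k kj; rewrite !mxE (negbTE kj) mulr0n ?mulr0 ?mul0r.
by rewrite !mxE eqxx mulr1n mulrC mulrA -expr2 mulr_ge0 ?sqr_ge0.
Qed.

Lemma sum_outer (U : M) (f : 'I_n.+1 -> 'I_n.+1 -> R) :
  \sum_i \sum_j f i j *: (col i U *m (col j U)^T) = U *m (\matrix_(i, j) f i j) *m U^T.
Proof.
apply/matrixP => a b; rewrite !mxE summxE.
under eq_bigr => i _ do rewrite summxE.
under [RHS]eq_bigr => k _ do rewrite !mxE mulr_suml.
rewrite exchange_big; apply: eq_bigr => i _; apply: eq_bigr => j _.
by rewrite !mxE big_ord1 !mxE; ring.
Qed.

Lemma sum_diag (U : M) (g : 'I_n.+1 -> R) :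
  \sum_i g i *: (col i U *m (col i U)^T) = U *m diag_mx (\row_i g i) *m U^T.
Proof.
apply/matrixP => a b; rewrite !mxE summxE; apply: eq_bigr => i _.
rewrite !mxE big_ord1 !mxE (bigD1 i) //= big1 ?addr0; last first.
  by move=> k kj; rewrite !mxE (negbTE kj) mulr0n ?mulr0 ?mul0r.
by rewrite !mxE eqxx mulr1n; ring.
Qed.

Lemma entry (U A : M) i j : ((col i U)^T *m A *m col j U) 0 0 = (U^T *m A *m U) i j.
Proof.
rewrite !mxE; apply: eq_bigr => k _; rewrite !mxE; congr (_ * _).
by apply: eq_bigr => l _; rewrite !mxE.
Qed.


Lemma trmxD' m k (A B : 'M[R]_(m, k)) : (A + B)^T = A^T + B^T.
Proof. exact: raddfD. Qed.

Lemma T1 (A Z P : M) : P^T = P ->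
  \tr ((A + Z)^T *m (A + Z) *m P) =
  \tr (A^T *m A *m P) + 2 * \tr (A *m P *m Z^T) + \tr (Z^T *m Z *m P).
Proof.
move=> hP; rewrite trmxD' mulmxDl !mulmxDr !mulmxDl !mxtraceD.
have h1 : \tr (A^T *m Z *m P) = \tr (A *m P *m Z^T).
  by rewrite -mxtrace_tr !trmx_mul trmxK hP mulmxA (mxtrace_mulC (P *m Z^T)) mulmxA.
have h2 : \tr (Z^T *m A *m P) = \tr (A *m P *m Z^T).
  by rewrite -mulmxA mxtrace_mulC.
rewrite h1 h2; lra.
Qed.

Lemma T2 (S0 Z : M) : S0^T = S0 ->
  \tr ((S0 + (Z + Z^T)) *m (S0 + (Z + Z^T))) =
  \tr (S0 *m S0) + 4 * \tr (S0 *m Z^T) + \tr ((Z + Z^T) *m (Z + Z^T)).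
Proof.
move=> hS; rewrite mulmxDl !mulmxDr !mxtraceD.
rewrite [\tr ((Z + Z^T) *m S0)]mxtrace_mulC.
have h1 : \tr (S0 *m Z) = \tr (S0 *m Z^T).
  by rewrite -mxtrace_tr trmx_mul hS mxtrace_mulC.
rewrite h1; lra.
Qed.

Lemma T3 (S0 Z E : M) : E^T = E ->
  \tr ((S0 + (Z + Z^T)) *m E) = \tr (S0 *m E) + 2 * \tr (E *m Z^T).
Proof.
move=> hE; rewrite !mulmxDl !mxtraceD.
have h1 : \tr (Z *m E) = \tr (E *m Z^T).
  by rewrite -mxtrace_tr trmx_mul hE.
have h2 : \tr (Z^T *m E) = \tr (E *m Z^T) by rewrite mxtrace_mulC.
rewrite h1 h2; lra.
Qed.

Lemma T4 (O Z : M) :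
  \tr ((O + Z) *m (O + Z)^T) = \tr (O *m O^T) + 2 * \tr (O *m Z^T) + \tr (Z *m Z^T).
Proof.
rewrite trmxD' mulmxDl !mulmxDr !mxtraceD.
have h1 : \tr (Z *m O^T) = \tr (O *m Z^T) by rewrite -mxtrace_tr trmx_mul trmxK.
rewrite h1; lra.
Qed.


Lemma lin4 (A B C D Z : M) a b c d :
  \tr ((a *: A + b *: B + c *: C + d *: D) *m Z^T) =
  a * \tr (A *m Z^T) + b * \tr (B *m Z^T) + c * \tr (C *m Z^T) + d * \tr (D *m Z^T).
Proof. by rewrite !mulmxDl -!scalemxAl !mxtraceD !mxtraceZ. Qed.

Lemma loss_min (P E Om Oh X U : M) (gam : 'I_n.+1 -> R) (Oms q r lt : R) :
  P = U *m diag_mx (\row_i gam i) *m U^T -> (forall i, 0 <= gam i) ->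
  0 <= q -> 0 <= lt -> E^T = E ->
  2 *: ((Oh - Om) *m P) + q *: (Oh + Oh^T - (2 * Oms)%:M) + (2 * r) *: E
    + (2 * lt) *: Oh = 0 ->
  \tr ((Oh - Om)^T *m (Oh - Om) *m P
       + (q / 4) *: ((Oh + Oh^T - (2 * Oms)%:M) *m (Oh + Oh^T - (2 * Oms)%:M))
       + r *: ((Oh + Oh^T - (2 * Oms)%:M) *m E)
       + lt *: (Oh *m Oh^T))
  <= \tr ((X - Om)^T *m (X - Om) *m P
       + (q / 4) *: ((X + X^T - (2 * Oms)%:M) *m (X + X^T - (2 * Oms)%:M))
       + r *: ((X + X^T - (2 * Oms)%:M) *m E)
       + lt *: (X *m X^T)).
Proof.
move=> hPd hg q0 lt0 hE hG.
have hP : P^T = P by rewrite hPd !trmx_mul trmxK tr_diag_mx mulmxA.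
set S0 := Oh + Oh^T - (2 * Oms)%:M in hG *.
have hS : S0^T = S0.
  by rewrite /S0 raddfB /= trmxD' trmxK tr_scalar_mx [Oh^T + _]addrC.
have [Z hX] : exists Z, X = Oh + Z by exists (X - Oh); rewrite addrC subrK.
subst X.
have e1 : Oh + Z - Om = (Oh - Om) + Z by rewrite addrAC.
have e2 : Oh + Z + (Oh + Z)^T - (2 * Oms)%:M = S0 + (Z + Z^T).
  by rewrite /S0; apply/matrixP => i j; rewrite !mxE; lra.
rewrite e1 e2.
rewrite !mxtraceD !mxtraceZ (T1 (Oh - Om) Z) // T2 // T3 // T4.
have hl : 2 * \tr ((Oh - Om) *m P *m Z^T) + q * \tr (S0 *m Z^T)
    + 2 * r * \tr (E *m Z^T) + 2 * lt * \tr (Oh *m Z^T) = 0.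
  have := congr1 (fun G => \tr (G *m Z^T)) hG.
  rewrite /= mul0mx mxtrace0 lin4 => <-.
  lra.
have n1 : 0 <= \tr (Z^T *m Z *m P).
  rewrite hPd -mulmxA mxtrace_mulC.
  have -> : Z *m (U *m diag_mx (\row_i gam i) *m U^T) *m Z^T
      = (Z *m U) *m diag_mx (\row_i gam i) *m (Z *m U)^T.
    by rewrite trmx_mul !mulmxA.
  exact: trBdB_ge0.
have n2 : 0 <= \tr ((Z + Z^T) *m (Z + Z^T)).
  have hW : (Z + Z^T)^T = Z + Z^T by rewrite trmxD' trmxK addrC.
  rewrite -{2}hW; exact: trAAt_ge0.
have n3 : 0 <= \tr (Z *m Z^T) by exact: trAAt_ge0.
have q4 : 0 <= q / 4 by apply: divr_ge0.
have m2 := mulr_ge0 q4 n2.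
have m3 := mulr_ge0 lt0 n3.
lra.
Qed.


Section Phi.
Variable U : M.
Hypothesis hU : U^T *m U = 1%:M.

Lemma phiD (A B : M) : U^T *m (A + B) *m U = U^T *m A *m U + U^T *m B *m U.
Proof. by rewrite mulmxDr mulmxDl. Qed.
Lemma phiN (A : M) : U^T *m (- A) *m U = - (U^T *m A *m U).
Proof. by rewrite mulmxN mulNmx. Qed.
Lemma phiZ a (A : M) : U^T *m (a *: A) *m U = a *: (U^T *m A *m U).
Proof. by rewrite -scalemxAr -scalemxAl. Qed.
Lemma phiT (A : M) : U^T *m A^T *m U = (U^T *m A *m U)^T.
Proof. by rewrite !trmx_mul trmxK mulmxA. Qed.
Lemma hVUr m (X : 'M[R]_(m, n.+1)) : X *m U^T *m U = X.
Proof. by rewrite -mulmxA hU mulmx1. Qed.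
Lemma phiS a : U^T *m a%:M *m U = a%:M.
Proof. by rewrite mul_mx_scalar -scalemxAl hU scalemx1. Qed.
Lemma phiUCV (C : M) : U^T *m (U *m C *m U^T) *m U = C.
Proof. by rewrite !mulmxA !hVUr hU mul1mx. Qed.
Lemma phiUCVUD (C D : M) :
  U^T *m (U *m C *m U^T *m (U *m D *m U^T)) *m U = C *m D.
Proof. by rewrite !mulmxA !hVUr hU mul1mx. Qed.
End Phi.

Lemma stationary (U Oma E : M) (gam : 'I_n.+1 -> R) (c : 'I_n.+1 -> 'I_n.+1 -> R)
    (Oms q r lt : R) :
  U^T *m U = 1%:M -> Oma^T = - Oma ->
  (forall i j, 2 * (- (c i j * gam j))
     + q * ((Oms * (i == j)%:R + (U^T *m Oma *m U) i j - c i j)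
           + (Oms * (i == j)%:R - (U^T *m Oma *m U) i j - c j i)
           - 2 * Oms * (i == j)%:R)
     + 2 * r * (U^T *m E *m U) i j
     + 2 * lt * (Oms * (i == j)%:R + (U^T *m Oma *m U) i j - c i j) = 0) ->
  2 *: ((Oms%:M + Oma - U *m (\matrix_(i, j) c i j) *m U^T - (Oms%:M + Oma))
         *m (U *m diag_mx (\row_i gam i) *m U^T))
  + q *: ((Oms%:M + Oma - U *m (\matrix_(i, j) c i j) *m U^T)
          + (Oms%:M + Oma - U *m (\matrix_(i, j) c i j) *m U^T)^T - (2 * Oms)%:M)
  + (2 * r) *: E
  + (2 * lt) *: (Oms%:M + Oma - U *m (\matrix_(i, j) c i j) *m U^T) = 0.
Proof.
move=> hU hOma hc.
have hUV : U *m U^T = 1%:M := mulmx1C hU.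
set C := \matrix_(i, j) c i j.
set Om := Oms%:M + Oma.
set Oh := Om - U *m C *m U^T.
set G := (X in X = 0).
suff h : U^T *m G *m U = 0.
  have <- : U *m (U^T *m G *m U) *m U^T = G.
    by rewrite !mulmxA hUV mul1mx -mulmxA hUV mulmx1.
  by rewrite h mulmx0 mul0mx.
have hA : Oh - Om = - (U *m C *m U^T) by rewrite /Oh addrAC subrr add0r.
have hOh : U^T *m Oh *m U = Oms%:M + U^T *m Oma *m U - C.
  by rewrite /Oh /Om !(phiD, phiN) phiS // phiUCV.
clearbody Oh Om.
have hW : forall i j, (U^T *m Oma *m U) j i = - (U^T *m Oma *m U) i j.
  have hWt : (U^T *m Oma *m U)^T = - (U^T *m Oma *m U) by rewrite -phiT hOma phiN.
  move=> i j; move: (U^T *m Oma *m U) hWt => W' hWt.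
  by have /matrixP/(_ i j) := hWt; rewrite !mxE.
rewrite /G !(phiD, phiZ, phiN) phiT hA mulNmx phiN phiUCVUD // phiS // hOh.
rewrite mul_mx_diag.
set W := U^T *m Oma *m U in hW hc *.
set Ev := U^T *m E *m U in hc *.
clearbody W Ev.
apply/matrixP => i j; rewrite !mxE (hW i j).
have := hc i j; rewrite [j == i]eq_sym.
case: (i == j) => /=; rewrite ?mulr1n ?mulr0n ?mulr1 ?mulr0 => h; lra.
Qed.

End Gen.

Definition cf {R : realFieldType} (q lt a b et w : R) :=
  (lt * (q + lt)^-1 * et * (1 + a * lt^-1) + w * (1 + a * (q + lt)^-1))
  / ((q + lt)^-1 * lt^-1 * a * b + (lt^-1 + (q + lt)^-1) / 2 * (a + b) + 1).

Lemma key (R : realFieldType) (q lt r Oms del e w a b et : R) :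
  0 <= q -> 0 < lt -> 0 <= a -> 0 <= b -> et = Oms * del + r / lt * e ->
  2 * (- (cf q lt a b et w * b))
  + q * ((Oms * del + w - cf q lt a b et w) + (Oms * del - w - cf q lt b a et (- w))
         - 2 * Oms * del)
  + 2 * r * e + 2 * lt * (Oms * del + w - cf q lt a b et w) = 0.
Proof.
move=> q0 lt0 a0 b0 ->.
have qt0 : 0 < q + lt by lra.
rewrite /cf.
field.
apply/and3P; split; apply: lt0r_neq0 => //; try lra.
have h1 := mulr_ge0 a0 b0. have h2 : 0 <= (q + lt + lt) * (a + b) by apply: mulr_ge0; lra.
have h3 := mulr_gt0 qt0 lt0. lra.
Qed.

Lemma trE {R : realFieldType} {n} (A : 'M[R]_n) i j : A^T i j = A j i.
Proof. by rewrite mxE. Qed.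
Lemma oppE {R : realFieldType} {n} (A : 'M[R]_n) i j : (- A) i j = - A i j.
Proof. by rewrite mxE. Qed.
Lemma scalE {R : realFieldType} {n} (a b : R) (A : 'M[R]_n) i j :
  (a%:M + b *: A) i j = a * (i == j)%:R + b * A i j.
Proof. by rewrite !mxE mulr_natr. Qed.

Theorem mainTheorem2 (R : realType) (n : nat)
  (Oms : R) (Oma : 'M[R]_n.+1) (D Sig0 : R) (m0 : 'cV[R]_n.+1)
  (T eps lam : R) (Dhat : 'M[R]_n.+1)
  (U : 'M[R]_n.+1) (gam : 'I_n.+1 -> R) :
  Oms < 0 -> Oma^T = - Oma -> 0 < D -> 0 < Sig0 -> 0 < T -> 0 <= eps ->
  0 < lam -> Dhat^T = Dhat ->
  (* orthonormal eigenvectors u_i = col i U, eigenvalues gam sorted, >= 0 *)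
  U^T *m U = 1%:M ->
  Pmat (Oms%:M + Oma) m0 T = \sum_i gam i *: (col i U *m (col i U)^T) ->
  (forall i j : 'I_n.+1, (i <= j)%N -> gam j <= gam i) ->
  (forall i, 0 <= gam i) ->
  let Om := Oms%:M + Oma in
  let q := qval Oms D Sig0 eps T in
  let r := rval Oms D Sig0 eps T in
  let lt := lam * T in
  let qt := q + lt in
  let Gp := (lt^-1 + qt^-1) / 2 in
  let omega := fun i j => ((col i U)^T *m Oma *m col j U) 0 0 in
  let eta := fun i j =>
    ((col i U)^T *m (Oms%:M + (r / lt) *: (Dhat - D%:M)) *m col j U) 0 0 in
  let Ohat := Om - \sum_i \sum_j
     ((lt * qt^-1 * eta i j * (1 + gam i * lt^-1) + omega i j * (1 + gam i * qt^-1))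
      / (qt^-1 * lt^-1 * gam i * gam j + Gp * (gam i + gam j) + 1))
     *: (col i U *m (col j U)^T) in
  forall X : 'M[R]_n.+1,
    Lloss Oms Oma D Sig0 m0 T eps lam Dhat Ohat
      <= Lloss Oms Oma D Sig0 m0 T eps lam Dhat X.
Proof.
move=> hOms hOma hD hSig hT heps hlam hDhat hU hP hsort hgam.
move=> Om q r lt qt Gp omega eta Ohat X.
have q0 : 0 <= q.
  rewrite /q /qval; apply: Rintegral_ge0 => t _.
  by apply: divr_ge0; [exact: sqr_ge0 | exact: sqrtr_ge0].
have lt0 : 0 < lt by apply: mulr_gt0.
rewrite sum_diag in hP.
rewrite /Lloss.
apply: (@loss_min _ _ _ _ _ _ _ U gam _ _ _ _ hP hgam q0 (ltW lt0)).
  by rewrite raddfB /= hDhat tr_scalar_mx.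
rewrite hP /Ohat sum_outer.
apply: stationary => // i j /=.
have E4 : (U^T *m Oma *m U) i j = omega i j by rewrite /omega entry.
have E1 : omega j i = - omega i j.
  by rewrite /omega !entry -(trE (U^T *m Oma *m U) i j) -phiT hOma phiN oppE.
have hK : (Oms%:M + (r / lt) *: (Dhat - D%:M))^T = Oms%:M + (r / lt) *: (Dhat - D%:M).
  by rewrite raddfD /= tr_scalar_mx linearZ /= raddfB /= hDhat tr_scalar_mx.
have E2 : eta j i = eta i j.
  rewrite /eta !entry.
  by rewrite -(trE (U^T *m (Oms%:M + (r / lt) *: (Dhat - D%:M)) *m U) i j) -phiT hK.
have E3 : eta i j = Oms * (i == j)%:R + r / lt * (U^T *m (Dhat - D%:M) *m U) i j.
  by rewrite /eta entry phiD phiZ (@phiS _ _ _ hU) scalE.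
rewrite E4 E1 E2.
exact: (@key _ q lt r Oms _ _ (omega i j) (gam i) (gam j) (eta i j) q0 lt0 (hgam i) (hgam j) E3).
Qed.
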